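(* Let $\mu,\sigma$ be nonzero constants, let $J$ be an open interval, let $a$ be a smooth function on $J$ with $a(y)\neq0$, and let $A$ be an antiderivative of $a$ on $J$ with $A(y)\neq0$ for all $y\in J$. Consider the PDE $$a'(y)U-a(y)U_y-3\mu U^2U_r+\sigma U_yU_{rr}-\sigma UU_{rry}=0$$ for $U=U(r,y)$, $(r,y)\in\mathbb{R}\times J$. For a smooth function $R$ on $\mathbb{R}$, the function $$U(r,y)=a(y)A(y)^{-2/3}R\big(rA(y)^{1/3}\big)$$ (real cube roots) solves this PDE if and only if $R=R(z)$ satisfies $$-\sigma zRR'''+\sigma zR'R''-2\sigma RR''-9\mu R^2R'-zR'+2R=0.$$ *)

(* Defs.v *)
From Stdlib Require Import Reals.
From Coquelicot Require Import Coquelicot.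
Open Scope R_scope.

Definition cbrt (x : R) : R :=
  if Rlt_dec 0 x then Rpower x (1/3)
  else if Rlt_dec x 0 then - Rpower (- x) (1/3) else 0.

Definition in_open_interval (lo hi : Rbar) (y : R) : Prop :=
  Rbar_lt lo y /\ Rbar_lt y hi.

Definition smooth_on (D : R -> Prop) (f : R -> R) : Prop :=
  forall (n : nat) (x : R), D x -> ex_derive_n f n x.

Definition Usol (a A Rf : R -> R) (r y : R) : R :=
  a y * / (cbrt (A y))^2 * Rf (r * cbrt (A y)).

Definition pde_lhs (mu sigma : R) (a : R -> R) (U : R -> R -> R) (r y : R) : R :=
  let Ur  := Derive (fun r' => U r' y) r in
  let Urr := Derive_n (fun r' => U r' y) 2 r in
  let Uy  := Derive (fun y' => U r y') y in
  let Urry := Derive (fun y' => Derive_n (fun r' => U r' y') 2 r) y in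
  Derive a y * U r y - a y * Uy - 3 * mu * (U r y)^2 * Ur
  + sigma * Uy * Urr - sigma * U r y * Urry.

Definition ode_lhs (mu sigma : R) (Rf : R -> R) (z : R) : R :=
  let R0 := Rf z in
  let R1 := Derive_n Rf 1 z in
  let R2 := Derive_n Rf 2 z in
  let R3 := Derive_n Rf 3 z in
  - sigma * z * R0 * R3 + sigma * z * R1 * R2 - 2 * sigma * R0 * R2
  - 9 * mu * R0^2 * R1 - z * R1 + 2 * R0.

(* Main.v *)
Require Import Defs.
From Stdlib Require Import Reals.
From Coquelicot Require Import Coquelicot.
Open Scope R_scope.
From Stdlib Require Import Lra.

Lemma cbrt_pos x : 0 < x -> cbrt x = Rpower x (1/3).
Proof. intros H. unfold cbrt. destruct (Rlt_dec 0 x); [reflexivity|lra]. Qed.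
Lemma cbrt_neg x : x < 0 -> cbrt x = - Rpower (-x) (1/3).
Proof. intros H. unfold cbrt. destruct (Rlt_dec 0 x); [lra|]. destruct (Rlt_dec x 0); [reflexivity|lra]. Qed.

Lemma rp_inv2 x : 0 < x -> Rpower x (1/3 - 1) = / (Rpower x (1/3))^2.
Proof.
  intros H. assert (H1 : Rpower x (1/3 - 1) * (Rpower x (1/3))^2 = 1).
  { simpl. rewrite Rmult_1_r, <- !Rpower_plus.
    replace (1/3 + 1/3 - 1 + 1/3)%R with 0 by field.
    replace (1 / 3 - 1 + (1 / 3 + 1 / 3)) with 0 by field. apply Rpower_O; auto. }
  assert (0 < Rpower x (1/3)) by (unfold Rpower; apply exp_pos).
  apply (Rmult_eq_reg_r ((Rpower x (1/3))^2)).
  - rewrite H1. field. lra.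
  - apply pow_nonzero. lra.
Qed.

Lemma cbrt_nz x : x <> 0 -> cbrt x <> 0.
Proof.
  intros H. destruct (Rlt_dec 0 x).
  - rewrite cbrt_pos by auto. unfold Rpower. pose proof (exp_pos (1/3 * ln x)). lra.
  - rewrite cbrt_neg by lra. unfold Rpower. pose proof (exp_pos (1/3 * ln (-x))). lra.
Qed.

Lemma loc_pos x : 0 < x -> locally x (fun t : R => 0 < t).
Proof.
  intros H. exists (mkposreal x H). intros t Ht. unfold ball in Ht; simpl in Ht.
  unfold AbsRing_ball, abs, minus, plus, opp in Ht; simpl in Ht.
  apply Rabs_def2 in Ht. lra.
Qed.
Lemma loc_neg x : x < 0 -> locally x (fun t : R => t < 0).
Proof.
  intros H. assert (H' : 0 < -x) by lra. exists (mkposreal (-x) H'). intros t Ht. unfold ball in Ht; simpl in Ht.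
  unfold AbsRing_ball, abs, minus, plus, opp in Ht; simpl in Ht.
  apply Rabs_def2 in Ht. lra.
Qed.

Lemma cbrt_derive x : x <> 0 -> is_derive cbrt x (/ (3 * (cbrt x)^2)).
Proof.
  intros H. destruct (Rlt_dec 0 x).
  - apply is_derive_ext_loc with (fun t => Rpower t (1/3)).
    { eapply filter_imp; [|apply loc_pos; exact r]. intros t Ht. simpl. rewrite cbrt_pos; auto. }
    rewrite cbrt_pos by auto.
    replace (/ (3 * Rpower x (1/3) ^ 2)) with (1/3 * Rpower x (1/3 - 1)).
    + apply is_derive_Reals, derivable_pt_lim_power; auto.
    + rewrite rp_inv2 by auto. assert (0 < Rpower x (1/3)) by (unfold Rpower; apply exp_pos).
      field. lra.
  - assert (Hn : x < 0) by lra.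
    apply is_derive_ext_loc with (fun t => - Rpower (-t) (1/3)).
    { eapply filter_imp; [|apply loc_neg; exact Hn]. intros t Ht. simpl. rewrite cbrt_neg; auto. }
    rewrite cbrt_neg by auto.
    assert (0 < Rpower (-x) (1/3)) by (unfold Rpower; apply exp_pos).
    replace (/ (3 * (- Rpower (-x) (1/3)) ^ 2)) with (- (scal (-1) (1/3 * Rpower (-x) (1/3 - 1)))).
    + apply (is_derive_opp (fun t => Rpower (-t) (1/3))).
      apply (is_derive_comp (fun t => Rpower t (1/3)) (fun t => - t)).
      * apply is_derive_Reals, derivable_pt_lim_power; lra.
      * auto_derive; auto; ring.
    + rewrite rp_inv2 by lra. unfold scal; simpl; unfold mult; simpl. field. lra.
Qed.

Lemma cbrt_cube x : cbrt x ^ 3 = x.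
Proof.
  destruct (Rlt_dec 0 x).
  - rewrite cbrt_pos by auto. simpl. rewrite Rmult_1_r, <- !Rpower_plus.
    replace (1/3 + (1/3 + 1/3)) with 1 by field. apply Rpower_1; auto.
  - destruct (Rlt_dec x 0).
    + rewrite cbrt_neg by auto. replace ((- Rpower (- x) (1 / 3)) ^ 3) with (- (Rpower (- x) (1 / 3)^3)) by ring.
      simpl. rewrite Rmult_1_r, <- !Rpower_plus.
      replace (1/3 + (1/3 + 1/3)) with 1 by field. rewrite Rpower_1; lra.
    + unfold cbrt. destruct (Rlt_dec 0 x); [lra|]. destruct (Rlt_dec x 0); [lra|]. simpl. lra.
Qed.

Lemma key mu sigma (a A Rf : R -> R) r y :
  ex_derive a y -> a y <> 0 -> is_derive A y (a y) -> A y <> 0 ->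
  smooth_on (fun _ => True) Rf ->
  pde_lhs mu sigma a (Usol a A Rf) r y =
  (a y ^ 3 / 3) * / (cbrt (A y))^5 * ode_lhs mu sigma Rf (r * cbrt (A y)).
Proof.
  intros Ha Ha0 HA HA0 HR.
  assert (Hc := cbrt_nz _ HA0).
  assert (Hcd := cbrt_derive _ HA0).
  assert (HR1 : forall z, ex_derive Rf z) by (intro z; exact (HR 1%nat z I)).
  assert (HR2 : forall z, ex_derive (Derive Rf) z) by (intro z; exact (HR 2%nat z I)).
  assert (HR3 : forall z, ex_derive (Derive (Derive Rf)) z) by (intro z; exact (HR 3%nat z I)).
  set (c := cbrt (A y)) in *.
  unfold pde_lhs, ode_lhs.
  assert (E2 : forall y', Derive_n (fun r' => Usol a A Rf r' y') 2 r =
      a y' * / cbrt (A y') ^ 2 * (cbrt (A y') ^ 2 * Derive_n Rf 2 (cbrt (A y') * r))).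
  { intro y'. unfold Usol.
    rewrite (Derive_n_ext _ (fun r' => a y' * / cbrt (A y') ^ 2 * Rf (cbrt (A y') * r'))).
    2:{ intro t. rewrite (Rmult_comm t). reflexivity. }
    rewrite Derive_n_scal_l, Derive_n_comp_scal. reflexivity.
    exists (mkposreal 1 Rlt_0_1). intros t _ k _. apply HR; auto. }
  rewrite (Derive_ext _ _ _ E2), E2.
  assert (Er : Derive (fun r' => Usol a A Rf r' y) r = a y * / c^2 * (c * Derive Rf (r * c))).
  { apply is_derive_unique. unfold Usol. fold c. auto_derive. auto. change (fun x : R => Rf x) with Rf. field. auto. }
  assert (Ey : Derive (fun y' => Usol a A Rf r y') y =
     (Derive a y * / c^2 + a y * (- (a y * (2 * c) * / (3 * c^2))) * / (c^2 * c^2)) * Rf (r * c)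
     + a y * / c^2 * (r * (a y / (3 * c^2)) * Derive Rf (r * c))).
  { apply is_derive_unique. unfold Usol. auto_derive.
    - fold c. repeat split; try assumption; try (eexists; eassumption); try (intro H0; apply Hc; nra); try apply HR1; try apply HR2; try apply HR3.
    - fold c. change (fun x : R => a x) with a. change (fun x : R => A x) with A.
      change (fun x : R => cbrt x) with cbrt. change (fun x : R => Rf x) with Rf.
      rewrite (is_derive_unique _ _ _ HA), (is_derive_unique _ _ _ Hcd). fold c. field. auto. }
  assert (Eyy : Derive (fun y' => a y' * / cbrt (A y') ^ 2 * (cbrt (A y') ^ 2 * Derive_n Rf 2 (cbrt (A y') * r))) y
     = Derive a y * Derive (Derive Rf) (r * c) + a y * r * (a y / (3 * c^2)) * Derive (Derive (Derive Rf)) (r * c)).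
  { apply is_derive_unique. auto_derive.
    - fold c. repeat split; try assumption; try (eexists; eassumption); try (intro H0; apply Hc; nra); try apply HR1; try apply HR2; try apply HR3.
    - fold c. change (fun x : R => a x) with a. change (fun x : R => A x) with A.
      change (fun x : R => cbrt x) with cbrt. change (fun x : R => Rf x) with Rf.
      rewrite (is_derive_unique _ _ _ HA), (is_derive_unique _ _ _ Hcd). fold c.
      rewrite (Rmult_comm c r). change (fun x : R => Derive Rf x) with (Derive Rf). change (fun x : R => Derive (Derive Rf) x) with (Derive (Derive Rf)). field. auto. }
  rewrite Eyy, Er, Ey. fold c. rewrite (Rmult_comm c r). unfold Usol. fold c. cbn [Derive_n].
  try change (fun x : R => Rf x) with Rf. try change (fun x : R => Derive Rf x) with (Derive Rf). try change (fun x : R => Derive (Derive Rf) x) with (Derive (Derive Rf)).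
  field. auto.
Qed.

Lemma interval_pt lo hi : Rbar_lt lo hi -> exists y, in_open_interval lo hi y.
Proof.
  unfold in_open_interval.
  destruct lo as [l| |], hi as [h| |]; simpl; intros H; try contradiction.
  - exists ((l+h)/2). simpl. lra.
  - exists (l+1). simpl. lra.
  - exists (h-1). simpl. lra.
  - exists 0. simpl. auto.
Qed.

Theorem mainTheorem5 (mu sigma : R) (lo hi : Rbar) (a A Rf : R -> R) :
  mu <> 0 -> sigma <> 0 ->
  Rbar_lt lo hi ->
  smooth_on (in_open_interval lo hi) a ->
  (forall y, in_open_interval lo hi y -> a y <> 0) ->
  (forall y, in_open_interval lo hi y -> is_derive A y (a y)) ->
  (forall y, in_open_interval lo hi y -> A y <> 0) ->
  smooth_on (fun _ => True) Rf ->
  ((forall r y, in_open_interval lo hi y -> pde_lhs mu sigma a (Usol a A Rf) r y = 0)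
   <-> (forall z, ode_lhs mu sigma Rf z = 0)).
Proof.
  intros Hmu Hs Hlh Ha Ha0 HA HA0 HR. split.
  - intros H z. destruct (interval_pt _ _ Hlh) as [y Hy].
    assert (Hc := cbrt_nz _ (HA0 y Hy)).
    specialize (H (z / cbrt (A y)) y Hy).
    rewrite key in H; auto.
    2: exact (Ha 1%nat y Hy).
    replace (z / cbrt (A y) * cbrt (A y)) with z in H by (field; auto).
    apply Rmult_integral in H. destruct H as [H|H]; auto.
    exfalso. assert (a y ^ 3 <> 0) by (apply pow_nonzero; auto).
    assert (cbrt (A y) ^ 5 <> 0) by (apply pow_nonzero; auto).
    assert (/ cbrt (A y) ^ 5 <> 0) by (apply Rinv_neq_0_compat; auto).
    apply Rmult_integral in H. destruct H as [H|H]; [|contradiction].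
    lra.
  - intros H r y Hy. rewrite key; auto. rewrite H. ring. exact (Ha 1%nat y Hy).
Qed.
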